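(* Let $K$ be a field, $\Lambda=(KQ/\langle I\rangle,|\cdot|)$ a graded pinched gentle algebra, $(\alpha,\beta)$ an acyclic graded Kronecker of $\Lambda$ with source $1$ and target $2$, $\mu\in K^*$, and $B=(P_2[|\alpha|]\oplus P_1[1],\partial=\begin{pmatrix}0&\alpha+\mu\beta\\0&0\end{pmatrix})\in\mathcal{P}(\Lambda)^{pre-tr}$. Let $\mathcal{A}$ be the full DG subcategory of $\mathcal{P}(\Lambda)^{pre-tr}$ on $Q_0\cup\{B\}$. Then for all $i\in Q_0\setminus\{1,2\}$, $H^*\mathrm{Hom}_{\mathcal{A}}(P_i,B)\simeq0\simeq H^*\mathrm{Hom}_{\mathcal{A}}(B,P_i)$.
   Context: Paths in $Q$ are composed right to left; $e_a$ trivial path, $P_a=e_a\Lambda$. Graded pinched gentle: $Q_1=Q_1^g\sqcup Q_1^p$, $I=I^g\sqcup I^p$, $(Q^g,\langle I^g\rangle)$ gentle (each vertex at most two incoming/outgoing arrows; $I^g$ paths of length two with, for each arrow $\alpha$, at most one arrow $\beta$ with $\alpha\beta$ a path in $I^g$, at most one $\gamma$ with $\gamma\alpha$ in $I^g$, at most one $\beta'$ with $\alpha\beta'$ a path not in $I^g$, at most one $\gamma'$ with $\gamma'\alpha$ not in $I^g$), $Q_1^p$ degree-zero loops at distinct vertices, and for each $v$ with loop $\gamma_v$, arrows $\alpha_v^\pm,\beta_v^\pm$ of $Q^g$ at $v$ with $\beta_v^+\alpha_v^-,\alpha_v^+\beta_v^-\in I^g$ give $I^p=\{\beta_v^+(\gamma_v+e_v),(\gamma_v+e_v)\beta_v^-,\alpha_v^+(\gamma_v-e_v),(\gamma_v-e_v)\alpha_v^-\}$.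 Graded Kronecker: arrows $\alpha,\beta$ of $Q^g$, not loops, common source $1$, common target $2$, $|\alpha|=|\beta|$, no loop of $Q_1^p$ at $1$ or $2$; acyclic: $\alpha,\beta$ not on an oriented cycle of $(Q^g,I^g)$. $\mathcal{P}(\Lambda)$ is the DG category with objects $Q_0$ (vertex $i$ written $P_i$), $\mathrm{Hom}(i,j)=e_j\Lambda e_i$ graded, zero differential. $\mathcal{P}(\Lambda)^{pre-tr}$ (one-sided twisted complexes): objects $(\bigoplus_iC_i[r_i],\partial)$ with $\partial$ strictly upper triangular, entries $\partial_{ij}\in\mathrm{Hom}(C_j,C_i)$ of degree $r_i-r_j+1$, $d_{naive}\partial+\partial^2=0$; morphisms are matrices of morphisms, an entry $b:C_l\to C'_k$ having degree $|b|+r_l-r'_k$; composition by matrix multiplication; $df=d_{naive}f+\partial'f-(-1)^lf\partial$ for $f$ of degree $l$. Each $P_i$ is the twisted complex $(P_i[0],0)$. *)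

(* Defs.v *)
From HB Require Import structures.
From mathcomp Require Import all_boot all_order all_algebra.
Set Implicit Arguments. Unset Strict Implicit. Unset Printing Implicit Defensive.
Import GRing.Theory.
Local Open Scope ring_scope.

Record quiver := Quiver {
  vert : finType; arr : finType; src : arr -> vert; tgt : arr -> vert }.

Section PathAlgebra.
Variable Q : quiver.

(** A path is a start vertex together with its arrows in order of traversal
    (first traversed arrow first).  The trivial path e_v is (v, [::]). *)
Definition qpath := (vert Q * seq (arr Q))%type.
Definition pstart (p : qpath) : vert Q := p.1.
Definition pend (p : qpath) : vert Q := last p.1 (map (@tgt Q) p.2).
Fixpoint valid_arrs (v : vert Q) (s : seq (arr Q)) : bool :=
  if s is a :: s' then (src a == v) && valid_arrs (tgt a) s' else true.
Definition valid (p : qpath) : bool := valid_arrs p.1 p.2.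
Definition pdeg (deg : arr Q -> int) (p : qpath) : int := \sum_(a <- p.2) deg a.

(** Composition p q = "p after q" (paths composed right to left);
    the empty list encodes the zero of the path algebra. *)
Definition pcomp (p q : qpath) : seq qpath :=
  if pend q == pstart p then [:: (pstart q, q.2 ++ p.2)] else [::].

Variable K : fieldType.

(** Elements of KQ as formal K-linear combinations of paths;
    their value is given by the coefficient function [coef]. *)
Definition KQ := seq (K * qpath).
Definition coef (x : KQ) (p : qpath) : K := \sum_(c <- x | c.2 == p) c.1.
Definition kq_add (x y : KQ) : KQ := x ++ y.
Definition kq_scale (c : K) (x : KQ) : KQ := [seq (c * t.1, t.2) | t <- x].
Definition kq_sub (x y : KQ) : KQ := x ++ kq_scale (-1) y.
Definition kq_mul (x y : KQ) : KQ :=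
  flatten [seq [seq (s.1 * t.1, pq) | pq <- pcomp s.2 t.2] | s <- x, t <- y].
Definition kq_sum (xs : seq KQ) : KQ := flatten xs.
Definition kq_path (p : qpath) : KQ := [:: (1, p)].
Definition kq_e (v : vert Q) : KQ := kq_path (v, [::]).
Definition kq_arr (a : arr Q) : KQ := kq_path (src a, [:: a]).

(** Membership in the two-sided ideal <R> of KQ generated by R:
    x = sum_t c_t * u_t * r_t * w_t with u_t, w_t paths of Q. *)
Definition in_ideal (R : seq KQ) (x : KQ) : Prop :=
  exists ts : seq (K * qpath * nat * qpath),
    all (fun t => [&& valid t.1.1.2, valid t.2 & (t.1.2 < size R)%N]) ts /\
    forall p, coef x p =
      coef (kq_sum [seq kq_scale t.1.1.1
                     (kq_mul (kq_mul (kq_path t.1.1.2) (nth [::] R t.1.2))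
                             (kq_path t.2)) | t <- ts]) p.

Definition kq_eqmod (R : seq KQ) (x y : KQ) : Prop := in_ideal R (kq_sub x y).

Definition in_eLe (i j : vert Q) (x : KQ) : bool :=
  all (fun t => [&& valid t.2, pstart t.2 == i & pend t.2 == j]) x.
Definition homog (deg : arr Q -> int) (d : int) (x : KQ) : bool :=
  all (fun t => pdeg deg t.2 == d) x.

(** * One-sided twisted complexes over P(Lambda)
    (bigoplus_{k < tsize} P_{tv k}[tsh k], tdiff), tdiff k l : C_l -> C_k. *)
Record twcx := Twcx {
  tsize : nat; tv : nat -> vert Q; tsh : nat -> int; tdiff : nat -> nat -> KQ }.

(** f : X -> Y homogeneous of degree n: entry f k l : C_l -> C'_k is an element
    of e_{v'_k} Lambda e_{v_l} of Lambda-degree |b| with |b| + r_l - r'_k = n. *)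
Definition tw_hom_homog (deg : arr Q -> int) (X Y : twcx) (n : int)
    (f : nat -> nat -> KQ) : Prop :=
  forall k l, (k < tsize Y)%N -> (l < tsize X)%N ->
    in_eLe (tv X l) (tv Y k) (f k l) && homog deg (n - tsh X l + tsh Y k) (f k l).

(** df = d_naive f + d' f - (-1)^n f d, with d_naive = 0 in P(Lambda). *)
Definition tw_d (X Y : twcx) (n : int) (f : nat -> nat -> KQ) (k l : nat) : KQ :=
  kq_sub (kq_sum [seq kq_mul (tdiff Y k m) (f m l) | m <- iota 0 (tsize Y)])
         (kq_scale ((-1) ^ n)
            (kq_sum [seq kq_mul (f k m) (tdiff X m l) | m <- iota 0 (tsize X)])).

(** H^n Hom(X, Y) = 0 for every n (all computations in Lambda = KQ/<R>). *)
Definition hom_acyclic (deg : arr Q -> int) (R : seq KQ) (X Y : twcx) : Prop :=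
  forall (n : int) (f : nat -> nat -> KQ),
    tw_hom_homog deg X Y n f ->
    (forall k l, (k < tsize Y)%N -> (l < tsize X)%N ->
       kq_eqmod R (tw_d X Y n f k l) [::]) ->
    exists g, tw_hom_homog deg X Y (n - 1) g /\
      forall k l, (k < tsize Y)%N -> (l < tsize X)%N ->
        kq_eqmod R (tw_d X Y (n - 1) g k l) (f k l).

Definition twP (i : vert Q) : twcx := Twcx 1 (fun _ => i) (fun _ => 0) (fun _ _ => [::]).

End PathAlgebra.

Record gpg (Q : quiver) := GPG {
  gdeg : arr Q -> int;
  gpin : pred (arr Q);
  gI : rel (arr Q);               (* gI a b : the length-2 path a b (b first) is in I^g *)
  (* for a pinched loop gamma_v: alpha_v^+, alpha_v^-, beta_v^+, beta_v^- *)
  gap : arr Q -> arr Q; gam : arr Q -> arr Q;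
  gbp : arr Q -> arr Q; gbm : arr Q -> arr Q }.

Section GPG.
Variables (Q : quiver) (D : gpg Q).
Let gen (a : arr Q) := ~~ gpin D a.

Definition is_gpg : Prop :=
  (forall g, gpin D g -> src g = tgt g /\ gdeg D g = 0) /\
  (forall g g', gpin D g -> gpin D g' -> src g = src g' -> g = g') /\
  (forall v, (#|[pred a | gen a && (src a == v)]| <= 2)%N) /\
  (forall v, (#|[pred a | gen a && (tgt a == v)]| <= 2)%N) /\
  (forall a b, gI D a b -> [&& gen a, gen b & src a == tgt b]) /\
  (forall a b b', gen a -> gI D a b -> gI D a b' -> b = b') /\
  (forall a c c', gen a -> gI D c a -> gI D c' a -> c = c') /\
  (forall a b b', gen a -> gen b -> gen b' -> src a = tgt b -> src a = tgt b' ->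
     ~~ gI D a b -> ~~ gI D a b' -> b = b') /\
  (forall a c c', gen a -> gen c -> gen c' -> src c = tgt a -> src c' = tgt a ->
     ~~ gI D c a -> ~~ gI D c' a -> c = c') /\
  (forall g, gpin D g ->
     [&& gen (gap D g), gen (gam D g), gen (gbp D g), gen (gbm D g),
         src (gap D g) == src g, src (gbp D g) == src g,
         tgt (gam D g) == src g, tgt (gbm D g) == src g,
         gI D (gbp D g) (gam D g) & gI D (gap D g) (gbm D g)]).

Variable K : fieldType.

Definition gpg_rels : seq (KQ Q K) :=
  flatten [seq [seq kq_path K (src b, [:: b; a]) | b <- enum (arr Q) & gI D a b]
          | a <- enum (arr Q)] ++
  flatten [seq let v := src g in
               [:: kq_mul (kq_arr K (gbp D g)) (kq_add (kq_arr K g) (kq_e K v));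
                   kq_mul (kq_add (kq_arr K g) (kq_e K v)) (kq_arr K (gbm D g));
                   kq_mul (kq_arr K (gap D g)) (kq_sub (kq_arr K g) (kq_e K v));
                   kq_mul (kq_sub (kq_arr K g) (kq_e K v)) (kq_arr K (gam D g))]
          | g <- enum (arr Q) & gpin D g].

Definition on_cycle (a : arr Q) : Prop :=
  exists p : qpath Q, [&& valid p, a \in p.2, pend p == pstart p & all gen p.2].

Definition is_acyclic_kronecker (al be : arr Q) (v1 v2 : vert Q) : Prop :=
  [/\ gen al /\ gen be /\ al != be,
      src al = v1 /\ src be = v1 /\ tgt al = v2 /\ tgt be = v2,
      src al != tgt al /\ src be != tgt be /\ gdeg D al = gdeg D be,
      (forall g, gpin D g -> src g <> v1 /\ src g <> v2)
    & ~ on_cycle al /\ ~ on_cycle be].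

Definition kron_B (al be : arr Q) (v1 v2 : vert Q) (mu : K) : twcx Q K :=
  Twcx 2 (fun k => if k == 0%N then v2 else v1)
         (fun k => if k == 0%N then gdeg D al else 1)
         (fun k l => if (k == 0%N) && (l == 1%N)
                     then kq_add (kq_arr K al) (kq_scale mu (kq_arr K be))
                     else [::]).
End GPG.

(* Main.v *)
Require Import Defs.
From HB Require Import structures.
From mathcomp Require Import all_boot all_order all_algebra.
From mathcomp Require Import ring.
Set Implicit Arguments. Unset Strict Implicit. Unset Printing Implicit Defensive.
Import GRing.Theory.
Local Open Scope ring_scope.

Section Infra.
Variables (Q : quiver) (K : fieldType).
Implicit Types (x y : KQ Q K) (p q : qpath Q).

Definition ceq x y := forall p, coef x p = coef y p.
Local Notation "x =c y" := (ceq x y) (at level 70).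

Lemma ceq_refl x : x =c x. Proof. by []. Qed.
Lemma ceq_sym x y : x =c y -> y =c x. Proof. by move=> h p; rewrite h. Qed.
Lemma ceq_trans x y z : x =c y -> y =c z -> x =c z.
Proof. by move=> h1 h2 p; rewrite h1 h2. Qed.

Lemma coef_nil p : coef ([::] : KQ Q K) p = 0.
Proof. by rewrite /coef big_nil. Qed.
Lemma coef_cons t x p : coef (t :: x) p = (if t.2 == p then t.1 else 0) + coef x p.
Proof. by rewrite /coef big_cons; case: ifP; rewrite ?add0r. Qed.
Lemma coef_cat x y p : coef (x ++ y) p = coef x p + coef y p.
Proof. by rewrite /coef big_cat. Qed.
Lemma coef_scale c x p : coef (kq_scale c x) p = c * coef x p.
Proof.
elim: x => [|t x IH]; first by rewrite /= !coef_nil mulr0.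
by rewrite /= !coef_cons IH /=; case: ifP; rewrite ?mulr0 ?add0r // mulrDr.
Qed.
Lemma coef_flatten (xs : seq (KQ Q K)) p : coef (flatten xs) p = \sum_(x <- xs) coef x p.
Proof.
elim: xs => [|x xs IH]; first by rewrite big_nil coef_nil.
by rewrite /= coef_cat IH big_cons.
Qed.
Lemma coef_sum (xs : seq (KQ Q K)) p : coef (kq_sum xs) p = \sum_(x <- xs) coef x p.
Proof. exact: coef_flatten. Qed.
Lemma coef_add x y p : coef (kq_add x y) p = coef x p + coef y p.
Proof. exact: coef_cat. Qed.
Lemma coef_sub x y p : coef (kq_sub x y) p = coef x p - coef y p.
Proof. by rewrite /kq_sub coef_cat coef_scale mulN1r. Qed.
Lemma coef_path q p : coef (kq_path K q) p = (q == p)%:R.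
Proof. by rewrite /kq_path coef_cons coef_nil addr0 /=; case: ifP. Qed.

Lemma sum_coef_gen (F : qpath Q -> K) x (s : seq (qpath Q)) :
  uniq s -> {subset map snd x <= s} ->
  \sum_(t <- x) t.1 * F t.2 = \sum_(p <- s) coef x p * F p.
Proof.
move=> us; elim: x => [|t x IH] sub.
  by rewrite big_nil big1 // => p _; rewrite coef_nil mul0r.
rewrite big_cons IH; last by move=> p hp; apply: sub; rewrite inE hp orbT.
have ts : t.2 \in s by apply: sub; rewrite inE eqxx.
under [X in _ = X]eq_bigr => p _ do rewrite coef_cons mulrDl.
rewrite big_split /=; congr (_ + _).
rewrite (bigD1_seq t.2) //= eqxx big1 ?addr0 // => p /negPf hp.
by rewrite eq_sym hp mul0r.
Qed.

Lemma sum_coef (F : qpath Q -> K) x y : x =c y ->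
  \sum_(t <- x) t.1 * F t.2 = \sum_(t <- y) t.1 * F t.2.
Proof.
move=> h; set s := undup (map snd (x ++ y)).
have us : uniq s by exact: undup_uniq.
rewrite (@sum_coef_gen F x s) ?(@sum_coef_gen F y s) //.
- by apply: eq_bigr => p _; rewrite h.
- by move=> p hp; rewrite mem_undup map_cat mem_cat hp orbT.
- by move=> p hp; rewrite mem_undup map_cat mem_cat hp.
Qed.

Lemma coef_as_sum x p : coef x p = \sum_(t <- x) t.1 * (t.2 == p)%:R.
Proof.
elim: x => [|t x IH]; first by rewrite coef_nil big_nil.
by rewrite coef_cons big_cons IH; case: ifP; rewrite ?mulr1 ?mulr0.
Qed.

Definition lin (h : qpath Q -> KQ Q K) x : KQ Q K :=
  flatten [seq kq_scale t.1 (h t.2) | t <- x].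

Lemma lin_cons h t x : lin h (t :: x) = kq_scale t.1 (h t.2) ++ lin h x.
Proof. by []. Qed.
Lemma lin_cat h x y : lin h (x ++ y) = lin h x ++ lin h y.
Proof. by rewrite /lin map_cat flatten_cat. Qed.

Lemma coef_lin h x p : coef (lin h x) p = \sum_(t <- x) t.1 * coef (h t.2) p.
Proof.
elim: x => [|t x IH]; first by rewrite coef_nil big_nil.
by rewrite lin_cons coef_cat coef_scale IH big_cons.
Qed.

Lemma lin_ceq h x y : x =c y -> lin h x =c lin h y.
Proof. by move=> e p; rewrite !coef_lin (sum_coef (fun q => coef (h q) p) e). Qed.

Lemma lin_ext_in h h' x : (forall t, t \in x -> h t.2 =c h' t.2) -> lin h x =c lin h' x.
Proof.
move=> e p; rewrite !coef_lin big_seq_cond [in RHS]big_seq_cond.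
by apply: eq_bigr => t /andP[tx _]; rewrite e.
Qed.

Lemma lin_path x : lin (kq_path K) x =c x.
Proof. by move=> p; rewrite coef_lin coef_as_sum; apply: eq_bigr => t _; rewrite coef_path. Qed.

Lemma sum_lin h x (F : qpath Q -> K) :
  \sum_(t <- lin h x) t.1 * F t.2 = \sum_(t <- x) t.1 * \sum_(t' <- h t.2) t'.1 * F t'.2.
Proof.
elim: x => [|t x IH]; first by rewrite !big_nil.
rewrite lin_cons big_cat IH big_cons; congr (_ + _).
rewrite /kq_scale big_map big_distrr /=; apply: eq_bigr => t' _; by rewrite mulrA.
Qed.

Lemma lin_lin h h' x : lin h (lin h' x) =c lin (fun q => lin h (h' q)) x.
Proof.
move=> p; rewrite !coef_lin (sum_lin h' x (fun q => coef (h q) p)); apply: eq_bigr => t _; by rewrite coef_lin.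
Qed.

Lemma lin_scale h c x : lin h (kq_scale c x) =c kq_scale c (lin h x).
Proof.
move=> p; rewrite coef_scale !coef_lin /kq_scale big_map big_distrr /=.
by apply: eq_bigr => t _; rewrite mulrA.
Qed.

Lemma lin_sub h h' x : kq_sub (lin h x) (lin h' x) =c lin (fun q => kq_sub (h q) (h' q)) x.
Proof.
move=> p; rewrite coef_sub !coef_lin -sumrB; apply: eq_bigr => t _.
by rewrite coef_sub mulrBr.
Qed.

Definition cp p q r : K := if pend q == pstart p then ((pstart q, q.2 ++ p.2) == r)%:R else 0.

Lemma coef_mul x y r :
  coef (kq_mul x y) r = \sum_(s <- x) \sum_(t <- y) s.1 * t.1 * cp s.2 t.2 r.
Proof.
rewrite /kq_mul coef_flatten.
elim: x => [|s x IH]; first by rewrite !big_nil.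
rewrite /= big_cat IH big_cons; congr (_ + _).
rewrite big_map; apply: eq_bigr => t _.
rewrite /Defs.pcomp /cp; case: ifP => _ /=; last by rewrite coef_nil mulr0.
by rewrite coef_cons coef_nil addr0 /=; case: ifP; rewrite ?mulr1 ?mulr0.
Qed.

Lemma coef_mul' x y r :
  coef (kq_mul x y) r = \sum_(s <- x) s.1 * \sum_(t <- y) t.1 * cp s.2 t.2 r.
Proof.
rewrite coef_mul; apply: eq_bigr => s _; rewrite big_distrr /=.
by apply: eq_bigr => t _; rewrite mulrA.
Qed.

Lemma mul_ceq x x' y y' : x =c x' -> y =c y' -> kq_mul x y =c kq_mul x' y'.
Proof.
move=> ex ey r; rewrite !coef_mul'.
have -> := sum_coef (fun q => \sum_(t <- y) t.1 * cp q t.2 r) ex.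
apply: eq_bigr => s _; congr (_ * _).
exact: (sum_coef (fun q => cp s.2 q r) ey).
Qed.

Lemma mul_lin_r x y : kq_mul x y =c lin (fun q => kq_mul x (kq_path K q)) y.
Proof.
move=> r; rewrite coef_mul coef_lin exchange_big /=; apply: eq_bigr => t _.
rewrite coef_mul big_distrr /=; apply: eq_bigr => s _.
by rewrite big_cons big_nil addr0 /= mulr1 mulrCA mulrA.
Qed.

Lemma mul_lin_l x y : kq_mul x y =c lin (fun q => kq_mul (kq_path K q) y) x.
Proof.
move=> r; rewrite coef_mul coef_lin; apply: eq_bigr => s _.
rewrite coef_mul big_cons big_nil addr0 /= big_distrr /=; apply: eq_bigr => t _.
by rewrite mul1r mulrA.
Qed.

Lemma mul_scale_l c x y : kq_mul (kq_scale c x) y =c kq_scale c (kq_mul x y).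
Proof.
move=> r; rewrite coef_scale !coef_mul /kq_scale big_map big_distrr /=.
apply: eq_bigr => s _; rewrite big_distrr /=; apply: eq_bigr => t _.
by rewrite !mulrA.
Qed.

Lemma mul_nil_l y : kq_mul [::] y =c [::].
Proof. by []. Qed.
Lemma mul_nil_r x : kq_mul x [::] =c [::].
Proof. by move=> r; rewrite (coef_mul x [::]) coef_nil big1 // => s _; rewrite big_nil. Qed.

Lemma mul_path_path p q :
  kq_mul (kq_path K p) (kq_path K q) =c
  (if pend q == pstart p then kq_path K (pstart q, q.2 ++ p.2) else [::]).
Proof.
move=> r; rewrite coef_mul !big_cons !big_nil !addr0 /= !mul1r /cp.
by case: ifP => _; rewrite ?coef_path ?coef_nil.
Qed.

Variable R : seq (KQ Q K).

Lemma ideal_ceq x y : x =c y -> in_ideal R x -> in_ideal R y.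
Proof. by move=> e [ts [h1 h2]]; exists ts; split => // p; rewrite -e. Qed.

Lemma ideal_nil : in_ideal R [::].
Proof. by exists [::]; split => // p; rewrite coef_nil /= coef_nil. Qed.

Lemma ideal_cat x y : in_ideal R x -> in_ideal R y -> in_ideal R (x ++ y).
Proof.
move=> [ts [h1 h2]] [ts' [h1' h2']]; exists (ts ++ ts'); split.
  by rewrite all_cat h1 h1'.
by move=> p; rewrite coef_cat h2 h2' /kq_sum map_cat flatten_cat coef_cat.
Qed.

Lemma ideal_scale c x : in_ideal R x -> in_ideal R (kq_scale c x).
Proof.
move=> [ts [h1 h2]].
exists [seq (c * t.1.1.1, t.1.1.2, t.1.2, t.2) | t <- ts]; split.
  by rewrite all_map; apply: sub_all h1 => t.
move=> p; rewrite coef_scale h2 !coef_sum -map_comp !big_map big_distrr /=.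
by apply: eq_bigr => t _; rewrite !coef_scale mulrA.
Qed.

Lemma ideal_gen u r w : valid u -> valid w -> r \in R ->
  in_ideal R (kq_mul (kq_mul (kq_path K u) r) (kq_path K w)).
Proof.
move=> vu vw rR; exists [:: (1, u, index r R, w)]; split.
  by rewrite /= vu vw index_mem rR.
by move=> p; rewrite coef_sum big_cons big_nil addr0 coef_scale mul1r nth_index.
Qed.

Lemma ideal_lin h x : (forall t, t \in x -> in_ideal R (h t.2)) -> in_ideal R (lin h x).
Proof.
elim: x => [|t x IH] H; first exact: ideal_nil.
rewrite lin_cons; apply: ideal_cat; first by apply: ideal_scale; apply: H; rewrite inE eqxx.
by apply: IH => t' ht'; apply: H; rewrite inE ht' orbT.
Qed.

Lemma ideal_sub x y : in_ideal R x -> in_ideal R y -> in_ideal R (kq_sub x y).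
Proof. by move=> hx hy; apply: ideal_cat => //; apply: ideal_scale. Qed.

Lemma ideal_unscale c x : c != 0 -> in_ideal R (kq_scale c x) -> in_ideal R x.
Proof.
move=> c0 h; apply: (ideal_ceq _ (ideal_scale c^-1 h)) => p.
by rewrite !coef_scale mulrA mulVf // mul1r.
Qed.

Lemma ideal_lin_map h :
  (forall u r w, valid u -> valid w -> r \in R ->
     in_ideal R (lin h (kq_mul (kq_mul (kq_path K u) r) (kq_path K w)))) ->
  forall x, in_ideal R x -> in_ideal R (lin h x).
Proof.
move=> H x [ts [h1 h2]].
apply: (ideal_ceq (ceq_sym (lin_ceq h h2))).
rewrite /kq_sum; elim: ts h1 {h2} => [|t ts IH] /= h1; first exact: ideal_nil.
move/andP: h1 => [/and3P[vu vw rR] h1].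
rewrite /lin map_cat flatten_cat -/(lin h _) -/(lin h _).
apply: ideal_cat; last exact: IH.
apply: (ideal_ceq (ceq_sym (lin_scale _ _ _))); apply: ideal_scale.
by apply: H => //; rewrite mem_nth.
Qed.

End Infra.

Local Notation "x =c y" := (ceq x y) (at level 70).

Section Paths.
Variable Q : quiver.
Implicit Types (p q : qpath Q) (v : vert Q) (s : seq (arr Q)).

Lemma pend_rcons v s a : pend (v, rcons s a) = tgt a.
Proof. by rewrite /pend /= map_rcons last_rcons. Qed.
Lemma pend_nil v : pend (v, [::] : seq (arr Q)) = v.
Proof. by []. Qed.
Lemma pend_cons v a s : pend (v, a :: s) = pend (tgt a, s).
Proof. by []. Qed.

Lemma valid_arrs_cat v s1 s2 :
  valid_arrs v (s1 ++ s2) = valid_arrs v s1 && valid_arrs (pend (v, s1)) s2.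
Proof.
elim: s1 v => [|a s1 IH] v //=; by rewrite IH andbA.
Qed.

Lemma valid_rcons v s a : valid (v, rcons s a) = valid (v, s) && (src a == pend (v, s)).
Proof. by rewrite /valid /= -cats1 valid_arrs_cat /= andbT. Qed.

Lemma pdeg_rcons (dg : arr Q -> int) v s a : pdeg dg (v, rcons s a) = pdeg dg (v, s) + dg a.
Proof. by rewrite /pdeg /= -cats1 big_cat big_seq1. Qed.
Lemma pdeg_cons (dg : arr Q -> int) v v' s a : pdeg dg (v, a :: s) = dg a + pdeg dg (v', s).
Proof. by rewrite /pdeg /= big_cons. Qed.

End Paths.

Section Setting.
Variables (K : fieldType) (Q : quiver) (D : gpg Q)
    (al be : arr Q) (v1 v2 : vert Q) (mu : K).
Hypothesis HG : is_gpg D.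
Hypothesis HK : is_acyclic_kronecker D al be v1 v2.
Hypothesis Hmu : mu != 0.

Local Notation gen a := (~~ gpin D a).

Lemma K_src_al : src al = v1. Proof. by case: HK => _ [h _] _ _ _. Qed.
Lemma K_src_be : src be = v1. Proof. by case: HK => _ [_ [h _]] _ _ _. Qed.
Lemma K_tgt_al : tgt al = v2. Proof. by case: HK => _ [_ [_ [h _]]] _ _ _. Qed.
Lemma K_tgt_be : tgt be = v2. Proof. by case: HK => _ [_ [_ [_ h]]] _ _ _. Qed.
Lemma K_albe : al != be. Proof. by case: HK => [[_ [_ h]]] _ _ _ _. Qed.
Lemma K_gen_al : gen al. Proof. by case: HK => [[h _]] _ _ _ _. Qed.
Lemma K_gen_be : gen be. Proof. by case: HK => [[_ [h _]]] _ _ _ _. Qed.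
Lemma K_v12 : v1 != v2.
Proof. by case: HK => _ _ [h _] _ _; rewrite -K_src_al -K_tgt_al. Qed.
Lemma K_deg : gdeg D al = gdeg D be. Proof. by case: HK => _ _ [_ [_ h]] _ _. Qed.
Lemma K_pin g : gpin D g -> src g <> v1 /\ src g <> v2.
Proof. by case: HK => _ _ _ h _; apply: h. Qed.

Lemma pin_loop g : gpin D g -> src g = tgt g.
Proof. by case: HG => h _ gp; case: (h g gp). Qed.

Lemma gen_at c : [\/ src c = v1, src c = v2, tgt c = v1 | tgt c = v2] -> gen c.
Proof.
move=> H; apply/negP => gp; have [h1 h2] := K_pin gp; have e := pin_loop gp.
by case: H => E; [apply: h1|apply: h2|apply: h1; rewrite e|apply: h2; rewrite e].
Qed.

Lemma G1 c : tgt c = v1 -> gI D al c = ~~ gI D be c.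
Proof.
move=> tc; have gc : gen c by apply: gen_at; rewrite tc; constructor 3.
case: HG => _ [_ [_ [_ [_ [_ [H7 [_ [H9 _]]]]]]]].
case E1: (gI D al c); case E2: (gI D be c) => //=.
- by have := H7 c al be gc E1 E2 => e; move: K_albe; rewrite e eqxx.
- have e := H9 c al be gc K_gen_al K_gen_be (etrans K_src_al (esym tc)) (etrans K_src_be (esym tc)).
  by move: K_albe; rewrite e ?E1 ?E2 // eqxx.
Qed.

Lemma G2 c : src c = v2 -> gI D c al = ~~ gI D c be.
Proof.
move=> sc; have gc : gen c by apply: gen_at; rewrite sc; constructor 2.
case: HG => _ [_ [_ [_ [_ [H6 [_ [H8 _]]]]]]].
case E1: (gI D c al); case E2: (gI D c be) => //=.
- by have := H6 c al be gc E1 E2 => e; move: K_albe; rewrite e eqxx.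
- have e := H8 c al be gc K_gen_al K_gen_be (etrans sc (esym K_tgt_al)) (etrans sc (esym K_tgt_be)).
  by move: K_albe; rewrite e ?E1 ?E2 // eqxx.
Qed.

Lemma three_le (P : pred (arr Q)) a : P al -> P be -> P a -> a != al -> a != be ->
  (2 < #|P|)%N.
Proof.
move=> pa pb pc n1 n2.
have u : uniq [:: al; be; a].
  rewrite /= !inE !negb_or andbT K_albe /= eq_sym n1 eq_sym n2 //.

have -> : (2 < #|P|)%N = (size [:: al; be; a] <= #|P|)%N by [].
move/card_uniqP: u => <-; apply: subset_leq_card.
by apply/subsetP => x; rewrite !inE => /or3P[] /eqP ->.
Qed.

Lemma G3 a : tgt a = v2 -> a = al \/ a = be.
Proof.
move=> ta; case: HG => _ [_ [_ [H4 _]]].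
have ga : gen a by apply: gen_at; rewrite ta; constructor 4.
case: (eqVneq a al) => [->|n1]; first by left.
case: (eqVneq a be) => [->|n2]; first by right.
have := three_le (P := [pred x | gen x && (tgt x == v2)]) (a := a).
rewrite /= K_gen_al K_gen_be ga K_tgt_al K_tgt_be ta eqxx => /(_ isT isT isT n1 n2).
by rewrite ltnNge H4.
Qed.

Lemma G4 a : src a = v1 -> a = al \/ a = be.
Proof.
move=> ta; case: HG => _ [_ [H3 _]].
have ga : gen a by apply: gen_at; rewrite ta; constructor 1.
case: (eqVneq a al) => [->|n1]; first by left.
case: (eqVneq a be) => [->|n2]; first by right.
have := three_le (P := [pred x | gen x && (src x == v1)]) (a := a).
rewrite /= K_gen_al K_gen_be ga K_src_al K_src_be ta eqxx => /(_ isT isT isT n1 n2).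
by rewrite ltnNge H3.
Qed.

Lemma mem_mul' (x y : KQ Q K) t : t \in kq_mul x y ->
  exists sp tp, [/\ sp \in map snd x, tp \in map snd y, pend tp = pstart sp &
                 t.2 = (pstart tp, tp.2 ++ sp.2)].
Proof.
rewrite /kq_mul => /flattenP [l /allpairsP [[s t'] [hs ht ->]] /mapP [pq hpq ->]] /=.
move: hpq; rewrite /Defs.pcomp; case: ifP => // /eqP e; rewrite inE => /eqP ->.
by exists s.2, t'.2; split => //; apply: map_f.
Qed.

Definition Lgood (r : KQ Q K) :=
  (forall t, t \in r -> exists s z, t.2.2 = rcons s z /\
      (z \in [:: al; be] -> exists b, t.2.2 = [:: b; z] /\ gI D z b)) /\
  (forall t t', t \in r -> t' \in r -> pend t.2 = v1 -> pend t'.2 = v1 ->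
      last al t.2.2 = last al t'.2.2).

Definition Rgood (r : KQ Q K) :=
  (forall t, t \in r -> exists z s, t.2.2 = z :: s /\
      (z \in [:: al; be] -> exists b, t.2.2 = [:: z; b] /\ gI D b z)) /\
  (forall t t', t \in r -> t' \in r -> pstart t.2 = v2 -> pstart t'.2 = v2 ->
      head al t.2.2 = head al t'.2.2).

Lemma good_mono a b : gI D a b ->
  Lgood (kq_path K (src b, [:: b; a])) /\ Rgood (kq_path K (src b, [:: b; a])).
Proof.
move=> gab; split; split.
- move=> t; rewrite inE => /eqP -> /=; exists [:: b], a; split => // _; by exists b.
- by move=> t t'; rewrite !inE => /eqP -> /eqP ->.
- move=> t; rewrite inE => /eqP -> /=; exists b, [:: a]; split => // _; by exists a.
- by move=> t t'; rewrite !inE => /eqP -> /eqP ->.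
Qed.

Lemma Lgood_pinL x (y : KQ Q K) : x \notin [:: al; be] ->
  Lgood (kq_mul (kq_arr K x) y).
Proof.
move=> nx; split.
- move=> t /mem_mul' [sp [tp [hs _ _ ->]]]; move: hs; rewrite inE => /eqP -> /=.
  by exists tp.2, x; rewrite cats1; split => // /(negP nx).
- move=> t t' /mem_mul' [sp [tp [hs _ _ ->]]] /mem_mul' [sp' [tp' [hs' _ _ ->]]] _ _.
  move: hs hs'; rewrite !inE => /eqP -> /eqP -> /=.
  by rewrite !cats1 !last_rcons.
Qed.

Lemma Lgood_pinR x (y : KQ Q K) : x \notin [:: al; be] -> tgt x <> v1 ->
  (forall sp, sp \in map snd y -> sp.2 = [::] \/
       exists g, [/\ sp.2 = [:: g], g \notin [:: al; be] & tgt g <> v1]) ->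
  Lgood (kq_mul y (kq_arr K x)).
Proof.
move=> nx tx H; split.
- move=> t /mem_mul' [sp [tp [hs ht _ ->]]]; move: ht; rewrite inE => /eqP -> /=.
  case: (H _ hs) => [->|[g [-> ng _]]].
    by exists [::], x; split => // /(negP nx).
  by exists [:: x], g; split => // /(negP ng).
- move=> t t' /mem_mul' [sp [tp [hs ht _ ->]]] _; move: ht; rewrite inE => /eqP -> /=.
  by case: (H _ hs) => [->|[g [-> ng tg]]] /= e; [case: tx | case: tg].
Qed.

Lemma Rgood_pinR x (y : KQ Q K) : x \notin [:: al; be] ->
  Rgood (kq_mul y (kq_arr K x)).
Proof.
move=> nx; split.
- move=> t /mem_mul' [sp [tp [_ ht _ ->]]]; move: ht; rewrite inE => /eqP -> /=.
  by exists x, sp.2; split => // /(negP nx).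
- move=> t t' /mem_mul' [sp [tp [_ ht _ ->]]] /mem_mul' [sp' [tp' [_ ht' _ ->]]] _ _.
  by move: ht ht'; rewrite !inE => /eqP -> /eqP ->.
Qed.

Lemma Rgood_pinL x (y : KQ Q K) : x \notin [:: al; be] ->
  (forall tp, tp \in map snd y -> pstart tp <> v2 /\ (tp.2 = [::] \/
       exists g, tp.2 = [:: g] /\ g \notin [:: al; be])) ->
  Rgood (kq_mul (kq_arr K x) y).
Proof.
move=> nx H; split.
- move=> t /mem_mul' [sp [tp [hs ht _ ->]]]; move: hs; rewrite inE => /eqP -> /=.
  case: (H _ ht) => _ [->|[g [-> ng]]].
    by exists x, [::]; split => // /(negP nx).
  by exists g, [:: x]; split => // /(negP ng).
- move=> t t' /mem_mul' [sp [tp [_ ht _ ->]]] _ /= e.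
  by case: (H _ ht) => /(_ e).
Qed.

Lemma pin_facts g : gpin D g ->
  [/\ g \notin [:: al; be], src g <> v1, src g <> v2 & tgt g = src g].
Proof.
move=> gp; have [h1 h2] := K_pin gp; split => //; last by rewrite (pin_loop gp).
rewrite !inE negb_or; apply/andP; split; apply/eqP => e.
  by move: K_gen_al; rewrite -e gp.
by move: K_gen_be; rewrite -e gp.
Qed.

Lemma rels_good r : r \in gpg_rels D K -> Lgood r /\ Rgood r.
Proof.
rewrite mem_cat => /orP[/flatten_mapP [a _ /mapP [b hb ->]] | /flatten_mapP [g hg hr]].
  by apply: good_mono; move: hb; rewrite mem_filter => /andP[].
move: hg; rewrite mem_filter => /andP[gp _].
have [ng s1 s2 tg] := pin_facts gp.
case: HG => _ [_ [_ [_ [_ [_ [_ [_ [_ H10]]]]]]]].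
move/H10: (gp) => /andP[_ /andP[_ /andP[_ /andP[_ /andP[/eqP sap /andP[/eqP sbp /andP[/eqP tam /andP[/eqP tbm _]]]]]]]].
have srcn x : src x = src g -> x \notin [:: al; be].
  move=> e; rewrite !inE negb_or; apply/andP; split; apply/eqP => e'; apply: s1;
  by rewrite -e e' ?K_src_al ?K_src_be.
have tgtn x : tgt x = src g -> x \notin [:: al; be].
  move=> e; rewrite !inE negb_or; apply/andP; split; apply/eqP => e'; apply: s2;
  by rewrite -e e' ?K_tgt_al ?K_tgt_be.
have Hy1 : forall tp, tp \in [:: (src g, [:: g]); (src g, [::])] -> pstart tp <> v2 /\ (tp.2 = [::] \/
       exists g0, tp.2 = [:: g0] /\ g0 \notin [:: al; be]).
  move=> tp; rewrite !inE => /orP[] /eqP -> /=; split => //; by [right; exists g | left].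
have Hy2 : forall sp, sp \in [:: (src g, [:: g]); (src g, [::])] -> sp.2 = [::] \/
       exists g0, [/\ sp.2 = [:: g0], g0 \notin [:: al; be] & tgt g0 <> v1].
  move=> tp; rewrite !inE => /orP[] /eqP -> /=; [right; exists g; split => //; by rewrite tg | by left].
move: hr; rewrite /= !inE => /or4P[] /eqP ->; split.
- by apply: Lgood_pinL; apply: srcn.
- by apply: Rgood_pinL; [apply: srcn|].
- by apply: Lgood_pinR; [apply: tgtn| rewrite tbm|].
- by apply: Rgood_pinR; apply: tgtn.
- by apply: Lgood_pinL; apply: srcn.
- by apply: Rgood_pinL; [apply: srcn|].
- by apply: Lgood_pinR; [apply: tgtn| rewrite tam|].
- by apply: Rgood_pinR; apply: tgtn.
Qed.

Lemma mono_rel a b : gI D a b -> kq_path K (src b, [:: b; a]) \in gpg_rels D K.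
Proof.
move=> gab; rewrite mem_cat; apply/orP; left; apply/flatten_mapP; exists a; first by rewrite mem_enum.
by apply: map_f; rewrite mem_filter gab mem_enum.
Qed.

Local Notation R := (gpg_rels D K).
Implicit Types (u w p q X : qpath Q) (r x y A B : KQ Q K) (h : qpath Q -> KQ Q K).

Definition Lk (a b : arr Q) : K :=
  if a == al then (if gI D al b then 0 else 1)
  else if a == be then (if gI D be b then 0 else mu^-1) else 0.
Definition Lmap (q : qpath Q) : KQ Q K :=
  match rev q.2 with a :: b :: r => [:: (Lk a b, (q.1, rev (b :: r)))] | _ => [::] end.
Definition Rk (a b : arr Q) : K :=
  if a == al then (if gI D b al then 0 else 1)
  else if a == be then (if gI D b be then 0 else mu^-1) else 0.
Definition Rmap (q : qpath Q) : KQ Q K :=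
  match q.2 with a :: b :: r => [:: (Rk a b, (tgt a, b :: r))] | _ => [::] end.

Lemma Lmap_rr v s b a : Lmap (v, rcons (rcons s b) a) = [:: (Lk a b, (v, rcons s b))].
Proof. by rewrite /Lmap /= !rev_rcons rev_cons revK. Qed.
Lemma Rmap_cc v a b s : Rmap (v, a :: b :: s) = [:: (Rk a b, (tgt a, b :: s))].
Proof. by []. Qed.

Lemma single0 (X : qpath Q) : [:: ((0 : K), X)] =c [::].
Proof. by move=> p; rewrite coef_cons /= if_same add0r. Qed.
Lemma zero_scale (X : KQ Q K) : [::] =c kq_scale 0 X.
Proof. by move=> p; rewrite coef_scale mul0r coef_nil. Qed.

Lemma Lk_zero a b : a \notin [:: al; be] -> Lk a b = 0.
Proof. by rewrite !inE negb_or /Lk => /andP[/negPf -> /negPf ->]. Qed.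
Lemma Rk_zero a b : a \notin [:: al; be] -> Rk a b = 0.
Proof. by rewrite !inE negb_or /Rk => /andP[/negPf -> /negPf ->]. Qed.

Lemma Lmap_zero v s a : a \notin [:: al; be] -> Lmap (v, rcons s a) =c [::].
Proof.
move=> ha; case/lastP: s => [|s b]; first by rewrite /Lmap /=.
by rewrite Lmap_rr Lk_zero //; apply: single0.
Qed.
Lemma Rmap_zero v s a : a \notin [:: al; be] -> Rmap (v, a :: s) =c [::].
Proof.
move=> ha; case: s => [|b s]; first by rewrite /Rmap /=.
by rewrite Rmap_cc Rk_zero //; apply: single0.
Qed.

Lemma Lk_mono z b : z \in [:: al; be] -> gI D z b -> Lk z b = 0.
Proof.
rewrite /Lk !inE => /orP[] /eqP -> ->; rewrite ?eqxx //.
by rewrite eq_sym (negPf K_albe).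
Qed.
Lemma Rk_mono z b : z \in [:: al; be] -> gI D b z -> Rk z b = 0.
Proof.
rewrite /Rk !inE => /orP[] /eqP -> ->; rewrite ?eqxx //.
by rewrite eq_sym (negPf K_albe).
Qed.

Definition genF (u w q : qpath Q) : KQ Q K :=
  if (pend q == pstart u) && (pend w == pstart q)
  then kq_path K (pstart w, w.2 ++ (q.2 ++ u.2)) else [::].

Lemma lin_single (h : qpath Q -> KQ Q K) X : lin h (kq_path K X) =c h X.
Proof. by move=> p; rewrite coef_lin big_cons big_nil addr0 mul1r. Qed.

Lemma gen_ceq u r w :
  kq_mul (kq_mul (kq_path K u) r) (kq_path K w) =c lin (genF u w) r.
Proof.
apply: ceq_trans; first by apply: mul_ceq; [apply: mul_lin_r | apply: ceq_refl].
apply: ceq_trans; first by apply: mul_lin_l.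
apply: ceq_trans; first by apply: lin_lin.
apply: lin_ext_in => t _.
apply: ceq_trans; first by apply: lin_ceq; apply: mul_path_path.
rewrite /genF; case E: (pend t.2 == pstart u) => /=; last by [].
apply: ceq_trans; first by apply: lin_single.
apply: ceq_trans; first by apply: mul_path_path.
by [].
Qed.

Lemma lin_genF h u r w :
  lin h (kq_mul (kq_mul (kq_path K u) r) (kq_path K w)) =c
  lin (fun q => if (pend q == pstart u) && (pend w == pstart q)
                then h (pstart w, w.2 ++ (q.2 ++ u.2)) else [::]) r.
Proof.
apply: ceq_trans; first by apply: lin_ceq; apply: gen_ceq.
apply: ceq_trans; first by apply: lin_lin.
apply: lin_ext_in => t _; rewrite /genF; case: ifP => _ //.
exact: lin_single.
Qed.

Lemma lin_scale_h (f : qpath Q -> KQ Q K) c x :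
  lin (fun q => kq_scale c (f q)) x =c kq_scale c (lin f x).
Proof.
move=> p; rewrite coef_scale !coef_lin big_distrr /=; apply: eq_bigr => t _.
by rewrite coef_scale mulrCA.
Qed.

Lemma ideal_terms h u r w c u' w' : valid u' -> valid w' -> r \in R ->
  (forall t, t \in r -> (if (pend t.2 == pstart u) && (pend w == pstart t.2)
                then h (pstart w, w.2 ++ (t.2.2 ++ u.2)) else [::])
             =c kq_scale c (genF u' w' t.2)) ->
  in_ideal R (lin h (kq_mul (kq_mul (kq_path K u) r) (kq_path K w))).
Proof.
move=> vu vw rR H.
apply: (ideal_ceq _ (ideal_scale c (ideal_gen vu vw rR))).
apply: ceq_sym; apply: ceq_trans; first by apply: lin_genF.
apply: ceq_trans; first by apply: (lin_ext_in (h' := fun q => kq_scale c (genF u' w' q))); exact: H.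
apply: ceq_trans; first by apply: lin_scale_h.
by move=> p; rewrite !coef_scale (gen_ceq u' r w').
Qed.

Lemma pstart_pair (v : vert Q) (s : seq (arr Q)) : pstart (v, s) = v. Proof. by []. Qed.

Lemma Lgen u r w : valid u -> valid w -> r \in R ->
  in_ideal R (lin Lmap (kq_mul (kq_mul (kq_path K u) r) (kq_path K w))).
Proof.
move=> vu vw rR; have [[Li Lii] _] := rels_good rR.
case: u vu => u1 u2; case/lastP: u2 => [|u2 a] vu.
  apply: (@ideal_terms _ _ _ _ 0 (u1, [::]) w) => // t tr.
  case: ifP => _; last by apply: zero_scale.
  apply: ceq_trans; last by apply: zero_scale.
  have [s [z [e hz]]] := Li t tr; rewrite /= cats0.
  case: (boolP (z \in [:: al; be])) => hzz.
    have [b [e' gb]] := hz hzz; rewrite e'.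
    have -> : w.2 ++ [:: b; z] = rcons (rcons w.2 b) z by rewrite -!cats1 -catA.
    by rewrite Lmap_rr Lk_mono //; apply: single0.
  by rewrite e -rcons_cat; apply: Lmap_zero.
case/lastP: u2 vu => [|u0 b] vu.
  case: (boolP (a \in [:: al; be])) => ha; last first.
    apply: (@ideal_terms _ _ _ _ 0 (u1, [::]) w) => // t tr.
    case: ifP => _; last by apply: zero_scale.
    apply: ceq_trans; last by apply: zero_scale.
    by rewrite /= cats1 -rcons_cat; apply: Lmap_zero.
  have su : u1 = v1.
    move: vu; rewrite /valid /= andbT => /eqP <-.
    by move: ha; rewrite !inE => /orP[] /eqP ->; rewrite ?K_src_al ?K_src_be.
  case: (boolP (has (fun t => pend t.2 == v1) r)) => [/hasP [t0 t0r /eqP pt0] | /hasPn none].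
    apply: (@ideal_terms _ _ _ _ (Lk a (last al t0.2.2)) (u1, [::]) w) => // t tr.
    rewrite /genF /=; case: ifP => c1; last by [].
    move: c1 => /andP[/eqP pt _]; rewrite su in pt.
    have [s [z [e _]]] := Li t tr.
    have ez := Lii t t0 tr t0r pt pt0; rewrite e last_rcons in ez.
    rewrite e -ez cats0.
    have -> : w.2 ++ (rcons s z ++ [:: a]) = rcons (rcons (w.2 ++ s) z) a.
      by rewrite cats1 -!rcons_cat.
    by rewrite Lmap_rr /kq_scale /= mulr1 rcons_cat.
  apply: (@ideal_terms _ _ _ _ 0 (u1, [::]) w) => // t tr.
  have pt := none t tr.
  by rewrite /= su (negPf pt) /=; apply: zero_scale.
apply: (@ideal_terms _ _ _ _ (Lk a b) (u1, rcons u0 b) w) => //.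
  by move: vu; rewrite valid_rcons => /andP[].
move=> t tr; rewrite /genF /=; case: ifP => _; last by [].
have -> : w.2 ++ (t.2.2 ++ rcons (rcons u0 b) a) = rcons (rcons (w.2 ++ (t.2.2 ++ u0)) b) a.
  by rewrite !rcons_cat.
by rewrite Lmap_rr /kq_scale /= mulr1 !rcons_cat.
Qed.

Lemma Rgen u r w : valid u -> valid w -> r \in R ->
  in_ideal R (lin Rmap (kq_mul (kq_mul (kq_path K u) r) (kq_path K w))).
Proof.
move=> vu vw rR; have [_ [Ri Rii]] := rels_good rR.
case: w vw => w1 [|a [|b w0]] vw.
- apply: (@ideal_terms _ _ _ _ 0 u (w1, [::])) => // t tr.
  case: ifP => _; last by apply: zero_scale.
  apply: ceq_trans; last by apply: zero_scale.
  have [z [s [e hz]]] := Ri t tr; rewrite /=.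
  case: (boolP (z \in [:: al; be])) => hzz.
    have [b [e' gb]] := hz hzz; rewrite e' /=.
    by rewrite Rmap_cc Rk_mono //; apply: single0.
  by rewrite e /=; apply: Rmap_zero.
- case: (boolP (a \in [:: al; be])) => ha; last first.
    apply: (@ideal_terms _ _ _ _ 0 u (w1, [::])) => // t tr.
    case: ifP => _; last by apply: zero_scale.
    apply: ceq_trans; last by apply: zero_scale.
    by apply: Rmap_zero.
  have ta : tgt a = v2.
    by move: ha; rewrite !inE => /orP[] /eqP ->; rewrite ?K_tgt_al ?K_tgt_be.
  case: (boolP (has (fun t => pstart t.2 == v2) r)) => [/hasP [t0 t0r /eqP pt0] | /hasPn none].
    apply: (@ideal_terms _ _ _ _ (Rk a (head al t0.2.2)) u (tgt a, [::])) => // t tr.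
    rewrite /genF /=; case: ifP => c1; last by [].
    move: c1 => /andP[_ /eqP pt]; rewrite /pend /= ta in pt; symmetry in pt.
    have [z [s [e _]]] := Ri t tr.
    have ez := Rii t t0 tr t0r pt pt0; rewrite e /= in ez.
    by rewrite e -ez /= Rmap_cc /kq_scale /= mulr1.
  apply: (@ideal_terms _ _ _ _ 0 u (w1, [::])) => // t tr.
  have pt := none t tr.
  rewrite /= /pend /= ta [v2 == _]eq_sym (negPf pt) andbF; apply: zero_scale.
- apply: (@ideal_terms _ _ _ _ (Rk a b) u (tgt a, b :: w0)) => //.
    by move: vw; rewrite /valid /= => /andP[_].
  move=> t tr; rewrite /genF /=; case: ifP => _; last by [].
  by rewrite Rmap_cc /kq_scale /= mulr1.
Qed.

Definition dd : KQ Q K := kq_add (kq_arr K al) (kq_scale mu (kq_arr K be)).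

Lemma d_mul p : pend p = v1 ->
  kq_mul dd (kq_path K p) =c
  kq_path K (pstart p, p.2 ++ [:: al]) ++ kq_scale mu (kq_path K (pstart p, p.2 ++ [:: be])).
Proof.
move=> hp r; rewrite coef_mul' /dd /= !big_cons !big_nil /cp /= K_src_al K_src_be hp eqxx.
rewrite !coef_cons coef_nil /=; case: eqP => _; case: eqP => _; rewrite /= ?mulr1n ?mulr0n; ring.
Qed.

Lemma mul_d p : pstart p = v2 ->
  kq_mul (kq_path K p) dd =c
  kq_path K (v1, al :: p.2) ++ kq_scale mu (kq_path K (v1, be :: p.2)).
Proof.
move=> hp r; rewrite coef_mul' /dd /= !big_cons !big_nil /cp /pend /= K_tgt_al K_tgt_be hp eqxx.
rewrite K_src_al K_src_be !coef_cons coef_nil /=; case: eqP => _; case: eqP => _; rewrite /= ?mulr1n ?mulr0n; ring.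
Qed.

Lemma Lk_sum c : tgt c = v1 -> Lk al c + mu * Lk be c = 1.
Proof.
move=> tc; have := G1 tc; rewrite /Lk eqxx eq_sym (negPf K_albe) eqxx.
case: (gI D al c); case: (gI D be c) => //= _; rewrite ?mulr0 ?addr0 ?add0r //.
by rewrite mulfV.
Qed.

Lemma Rk_sum c : src c = v2 -> Rk al c + mu * Rk be c = 1.
Proof.
move=> tc; have := G2 tc; rewrite /Rk eqxx eq_sym (negPf K_albe) eqxx.
case: (gI D c al); case: (gI D c be) => //= _; rewrite ?mulr0 ?addr0 ?add0r //.
by rewrite mulfV.
Qed.

Lemma single_scale k X : [:: (k, X)] =c kq_scale k (kq_path K X).
Proof. by move=> r; rewrite coef_scale !coef_cons !coef_nil /=; case: ifP; rewrite ?addr0 ?mulr1 ?mulr0. Qed.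

Lemma mul_scale_r c x y : kq_mul x (kq_scale c y) =c kq_scale c (kq_mul x y).
Proof.
move=> r; rewrite coef_scale !coef_mul' big_distrr /=; apply: eq_bigr => s _.
rewrite /kq_scale big_map mulrCA; congr (_ * _).
by rewrite big_distrr /=; apply: eq_bigr => t _; rewrite mulrA.
Qed.

Lemma mono_ideal a b (v : vert Q) (w2 u2 : seq (arr Q)) : gI D a b -> valid (v, w2) -> pend (v, w2) = src b ->
  valid (tgt a, u2) -> in_ideal R (kq_path K (v, w2 ++ b :: a :: u2)).
Proof.
move=> gab vw pw vu.
apply: (ideal_ceq _ (ideal_gen vu vw (mono_rel gab))).
apply: ceq_trans; first by apply: gen_ceq.
apply: ceq_trans; first by apply: lin_single.
by rewrite /genF /= eqxx pw eqxx.
Qed.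

Lemma comb_ideal c1 c2 A B : (c1 = 0 \/ in_ideal R A) -> (c2 = 0 \/ in_ideal R B) ->
  in_ideal R (kq_scale c1 A ++ kq_scale c2 B).
Proof.
have z (c : K) (Y : KQ Q K) : c = 0 -> in_ideal R (kq_scale c Y).
  move=> ->; apply: (ideal_ceq (zero_scale Y)); exact: ideal_nil.
by move=> [/z h1|/(ideal_scale c1) h1] [/z h2|/(ideal_scale c2) h2]; apply: ideal_cat.
Qed.

Lemma Lshape q : valid q -> pend q = v2 -> pstart q != v1 -> pstart q != v2 ->
  exists s c a, [/\ q = (pstart q, rcons (rcons s c) a), a = al \/ a = be,
                    tgt c = v1 & valid (pstart q, rcons s c)].
Proof.
case: q => i0 qs /= vq pq n1 n2.
case/lastP: qs vq pq => [|qs a] vq pq; first by move: n2; rewrite -pq eqxx.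
rewrite pend_rcons in pq; have ha := G3 pq.
have sa : src a = v1 by case: ha => ->; rewrite ?K_src_al ?K_src_be.
move: vq; rewrite valid_rcons => /andP[vq /eqP e].
case/lastP: qs vq e => [|s c] vq e; first by move: n1; rewrite -sa e eqxx.
by exists s, c, a; split => //; rewrite -(pend_rcons i0 s c) -e.
Qed.

Lemma P1L p : valid p -> pend p = v1 -> pstart p != v1 ->
  lin Lmap (kq_mul dd (kq_path K p)) =c kq_path K p.
Proof.
case: p => i0 ps /= vp pp n1.
case/lastP: ps vp pp => [|s c] vp pp; first by move: n1; rewrite -pp eqxx.
move=> r; rewrite (lin_ceq Lmap (d_mul pp) r) lin_cat coef_cat (lin_single Lmap _ r).
rewrite (lin_scale Lmap _ _ r) coef_scale (lin_single Lmap _ r) /= !cats1 !Lmap_rr.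
rewrite coef_path !coef_cons !coef_nil /=; case: eqP => _; rewrite /= ?mulr1n ?mulr0n ?mulr0 ?addr0 //; last by rewrite mulr0 addr0.
by rewrite Lk_sum // -(pend_rcons i0 s c).
Qed.

Lemma P2L q : valid q -> pend q = v2 -> pstart q != v1 -> pstart q != v2 ->
  in_ideal R (kq_sub (kq_mul dd (Lmap q)) (kq_path K q)).
Proof.
move=> vq pq n1 n2; have [s [c [a [eq ha tc vp]]]] := Lshape vq pq n1 n2.
set i0 := pstart q in eq vp *; rewrite eq Lmap_rr.
set A := kq_path K (i0, rcons (rcons s c) al); set B := kq_path K (i0, rcons (rcons s c) be).
have pp : pend (i0, rcons s c) = v1 by rewrite pend_rcons.
have E : kq_sub (kq_mul dd [:: (Lk a c, (i0, rcons s c))]) (kq_path K (i0, rcons (rcons s c) a))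
   =c kq_scale (Lk a c - (a == al)%:R) A ++ kq_scale (Lk a c * mu - (a == be)%:R) B.
  move=> r; rewrite coef_sub (mul_ceq (ceq_refl dd) (single_scale _ _) r).
  rewrite (mul_scale_r _ _ _ r) coef_scale (d_mul pp r) coef_cat coef_scale !coef_cat !coef_scale.
  rewrite /A /B !coef_path /= !cats1.
  by case: ha => ->; rewrite eqxx ?(negPf K_albe) ?[be == al]eq_sym ?(negPf K_albe) /= ?mulr1n ?mulr0n; ring.
have [vs ps] : valid (i0, s) /\ pend (i0, s) = src c.
  by move: vp; rewrite valid_rcons => /andP[-> /eqP ->].
apply: (ideal_ceq (ceq_sym E)); apply: comb_ideal.
- have MA : gI D al c -> in_ideal R A.
    by move=> g; rewrite /A -!cats1 -catA /=; apply: mono_ideal.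
  have MB : gI D be c -> in_ideal R B.
    by move=> g; rewrite /B -!cats1 -catA /=; apply: mono_ideal.
  have g1 := G1 tc.
  case: ha => ->; rewrite /Lk eqxx ?(eq_sym be) ?(negPf K_albe) ?eqxx.
    case E1: (gI D al c); [by right; apply: MA | by left; rewrite subrr].
  case E1: (gI D be c); first by left; rewrite subrr.
  by right; apply: MA; rewrite g1 E1.
- have MB : gI D be c -> in_ideal R B.
    move=> g; rewrite /B -!cats1 -catA /=; exact: (mono_ideal g vs ps).
  have g1 := G1 tc.
  case: ha => ->; rewrite /Lk eqxx ?(eq_sym be) ?(negPf K_albe) ?eqxx /=.
    case E1: (gI D al c); first by left; rewrite mul0r subrr.
    by right; apply: MB; move: g1; rewrite E1 => /esym/negbFE.
  case E1: (gI D be c); first by right; apply: MB.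
  by left; rewrite mulVf // subrr.
Qed.

Lemma Rshape q : valid q -> pstart q = v1 -> pend q != v1 -> pend q != v2 ->
  exists a c s, [/\ q = (v1, a :: c :: s), a = al \/ a = be, src c = v2,
                    valid (v2, c :: s) & pend (v2, c :: s) = pend q].
Proof.
case: q => i0 [|a qs] /= vq pq n1 n2; first by move: n1; rewrite /pend /= pq eqxx.
move: vq; rewrite /valid /= => /andP[/eqP sa vq].
have ha := G4 (etrans sa pq).
have ta : tgt a = v2 by case: ha => ->; rewrite ?K_tgt_al ?K_tgt_be.
case: qs vq n1 n2 => [|c s] vq n1 n2; first by move: n2; rewrite /pend /= ta eqxx.
move: (vq) => /= /andP[/eqP sc _].
exists a, c, s; split => //.
all: try by rewrite pq.
all: try by rewrite sc.
all: try by rewrite /valid -ta.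
all: by rewrite /pend /= ta.
Qed.

Lemma P1R p : valid p -> pstart p = v2 -> pend p != v2 ->
  lin Rmap (kq_mul (kq_path K p) dd) =c kq_path K p.
Proof.
case: p => i0 [|c s] /= vp pp n2; first by move: n2; rewrite /pend /= pp eqxx.
move: (vp); rewrite /valid /= => /andP[/eqP sc _].
move=> r; rewrite (lin_ceq Rmap (mul_d (p := (i0, c :: s)) pp) r) lin_cat coef_cat (lin_single Rmap _ r).
rewrite (lin_scale Rmap _ _ r) coef_scale (lin_single Rmap _ r) /= !Rmap_cc K_tgt_al K_tgt_be.
rewrite coef_path !coef_cons !coef_nil /= pp; case: eqP => _; rewrite /= ?mulr1n ?mulr0n ?mulr0 ?addr0 //; last by rewrite mulr0 addr0.
by rewrite Rk_sum // sc.
Qed.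

Lemma P2R q : valid q -> pstart q = v1 -> pend q != v1 -> pend q != v2 ->
  in_ideal R (kq_sub (kq_mul (Rmap q) dd) (kq_path K q)).
Proof.
move=> vq pq n1 n2; have [a [c [s [eq ha sc vp pp]]]] := Rshape vq pq n1 n2.
rewrite eq Rmap_cc.
have ta : tgt a = v2 by case: ha => ->; rewrite ?K_tgt_al ?K_tgt_be.
rewrite ta.
set A := kq_path K (v1, al :: c :: s); set B := kq_path K (v1, be :: c :: s).
have E : kq_sub (kq_mul [:: (Rk a c, (v2, c :: s))] dd) (kq_path K (v1, a :: c :: s))
   =c kq_scale (Rk a c - (a == al)%:R) A ++ kq_scale (Rk a c * mu - (a == be)%:R) B.
  move=> r; rewrite coef_sub (mul_ceq (single_scale _ _) (ceq_refl dd) r).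
  rewrite (mul_scale_l _ _ _ r) coef_scale (mul_d (p := (v2, c :: s)) (erefl v2) r) coef_cat coef_scale !coef_cat !coef_scale.
  rewrite /A /B !coef_path /=.
  by case: ha => ->; rewrite eqxx ?(negPf K_albe) ?[be == al]eq_sym ?(negPf K_albe) /= ?mulr1n ?mulr0n; ring.
have vs : valid (tgt c, s) by move: vp; rewrite /valid /= => /andP[].
have MA : gI D c al -> in_ideal R A.
  move=> g; rewrite /A; apply: (@mono_ideal c al v1 [::] s g) => //.
  by rewrite K_src_al.
have MB : gI D c be -> in_ideal R B.
  move=> g; rewrite /B; apply: (@mono_ideal c be v1 [::] s g) => //.
  by rewrite K_src_be.
have g2 := G2 sc.
apply: (ideal_ceq (ceq_sym E)); apply: comb_ideal.
- case: ha => ->; rewrite /Rk eqxx ?(eq_sym be) ?(negPf K_albe) ?eqxx.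
    case E1: (gI D c al); [by right; apply: MA | by left; rewrite subrr].
  case E1: (gI D c be); first by left; rewrite subrr.
  by right; apply: MA; rewrite g2 E1.
- case: ha => ->; rewrite /Rk eqxx ?(eq_sym be) ?(negPf K_albe) ?eqxx /=.
    case E1: (gI D c al); first by left; rewrite mul0r subrr.
    by right; apply: MB; move: g2; rewrite E1 => /esym/negbFE.
  case E1: (gI D c be); first by right; apply: MB.
  by left; rewrite mulVf // subrr.
Qed.

Local Notation B := (kron_B D al be v1 v2 mu).

Lemma sub_ceq x x' y y' : x =c x' -> y =c y' -> kq_sub x y =c kq_sub x' y'.
Proof. by move=> e1 e2 r; rewrite !coef_sub e1 e2. Qed.

Lemma all_lin (P : qpath Q -> bool) h x :
  (forall t, t \in x -> all (fun t' => P t'.2) (h t.2)) -> all (fun t => P t.2) (lin h x).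
Proof.
elim: x => [|t x IH] H //; rewrite lin_cons all_cat; apply/andP; split.
  rewrite /kq_scale all_map; apply/allP => z hz /=.
  by apply: (allP (H t _)) z hz; rewrite inE eqxx.
by apply: IH => t' ht'; apply: H; rewrite inE ht' orbT.
Qed.

Lemma kall_scale (P : qpath Q -> bool) c x :
  all (fun t => P t.2) (kq_scale c x) = all (fun t => P t.2) x.
Proof. by rewrite /kq_scale all_map. Qed.

Lemma twA00 i n g : tw_d (twP K i) B n g 0 0 =c kq_mul dd (g 1%N 0%N).
Proof.
have -> : tw_d (twP K i) B n g 0 0 = kq_sub (kq_mul [::] (g 0%N 0%N) ++ (kq_mul dd (g 1%N 0%N) ++ [::]))
   (kq_scale ((-1) ^ n) (kq_mul (g 0%N 0%N) [::] ++ [::])) by [].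
move=> r; rewrite coef_sub !coef_cat coef_scale coef_cat (mul_nil_r _ r) !coef_nil.
by ring.
Qed.

Lemma twA10 i n g : tw_d (twP K i) B n g 1 0 =c [::].
Proof.
have -> : tw_d (twP K i) B n g 1 0 = kq_sub (kq_mul [::] (g 0%N 0%N) ++ (kq_mul [::] (g 1%N 0%N) ++ [::]))
   (kq_scale ((-1) ^ n) (kq_mul (g 1%N 0%N) [::] ++ [::])) by [].
move=> r; rewrite coef_sub !coef_cat coef_scale coef_cat (mul_nil_r _ r) !coef_nil.
by rewrite ?coef_nil; ring.
Qed.

Lemma twB00 i n g : tw_d B (twP K i) n g 0 0 =c [::].
Proof.
have -> : tw_d B (twP K i) n g 0 0 = kq_sub (kq_mul [::] (g 0%N 0%N) ++ [::])
   (kq_scale ((-1) ^ n) (kq_mul (g 0%N 0%N) [::] ++ (kq_mul (g 0%N 1%N) [::] ++ [::]))) by [].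
move=> r; rewrite coef_sub !coef_cat coef_scale !coef_cat !(mul_nil_r _ r) !coef_nil.
by rewrite ?coef_nil; ring.
Qed.

Lemma twB01 i n g : tw_d B (twP K i) n g 0 1 =c kq_scale (- (-1) ^ n) (kq_mul (g 0%N 0%N) dd).
Proof.
have -> : tw_d B (twP K i) n g 0 1 = kq_sub (kq_mul [::] (g 0%N 1%N) ++ [::])
   (kq_scale ((-1) ^ n) (kq_mul (g 0%N 0%N) dd ++ (kq_mul (g 0%N 1%N) [::] ++ [::]))) by [].
move=> r; rewrite coef_sub !coef_cat coef_scale coef_scale !coef_cat !(mul_nil_r _ r) !coef_nil.
by rewrite ?coef_nil; ring.
Qed.

Lemma mul_lin_r' x h y : kq_mul x (lin h y) =c lin (fun q => kq_mul x (h q)) y.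
Proof.
apply: ceq_trans; first by apply: mul_lin_r.
apply: ceq_trans; first by apply: lin_lin.
by apply: lin_ext_in => t _; apply: ceq_sym; apply: mul_lin_r.
Qed.

Lemma mul_lin_l' h x y : kq_mul (lin h x) y =c lin (fun q => kq_mul (h q) y) x.
Proof.
apply: ceq_trans; first by apply: mul_lin_l.
apply: ceq_trans; first by apply: lin_lin.
by apply: lin_ext_in => t _; apply: ceq_sym; apply: mul_lin_l.
Qed.

Lemma sign_neq0 (n : int) : ((-1 : K) ^ n) != 0.
Proof. by apply: expfz_neq0; rewrite oppr_eq0 oner_eq0. Qed.

Lemma mainA i : i != v1 -> i != v2 -> hom_acyclic (gdeg D) R (twP K i) B.
Proof.
move=> n1 n2 n f Hf Hcl.
have /andP[Ya Yb] := Hf 0%N 0%N isT isT.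
have /andP[Xa _] := Hf 1%N 0%N isT isT.
rewrite /= in Ya Yb Xa.
have Hx : in_ideal R (f 1%N 0%N).
  have h1 : in_ideal R (kq_mul dd (f 1%N 0%N)).
    apply: (ideal_ceq _ (Hcl 0%N 0%N isT isT)) => r.
    by rewrite coef_sub coef_nil subr0; apply: twA00.
  have h2 := ideal_lin_map (@Lgen) h1.
  apply: (ideal_ceq _ h2).
  apply: ceq_trans; first by apply: lin_ceq; apply: mul_lin_r.
  apply: ceq_trans; first by apply: lin_lin.
  apply: (ceq_trans _ (lin_path _)).
  apply: lin_ext_in => t tx; have /and3P[vt /eqP st /eqP et] := allP Xa t tx.
  by apply: P1L => //; rewrite st.
exists (fun k l => if k == 1%N then lin Lmap (f 0%N 0%N) else [::]); split.
  move=> [|[|k]] [|l] // _ _ /=; rewrite /in_eLe /homog; apply/andP; split.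
    apply: (all_lin (P := fun p => [&& valid p, pstart p == i & pend p == v1])) => t ty.
    have /and3P[vt /eqP st /eqP et] := allP Ya t ty.
    have [s [c [a [eq ha tc vp]]]] := Lshape vt et (introT idP (etrans (congr1 (fun z => z != v1) st) n1)) (etrans (congr1 (fun z => z != v2) st) n2).
    by rewrite eq Lmap_rr /= vp pend_rcons tc st !eqxx.
  apply: (all_lin (P := fun p => pdeg (gdeg D) p == n - 1 - 0 + 1)) => t ty.
  have /and3P[vt /eqP st /eqP et] := allP Ya t ty.
  have /eqP dt := allP Yb t ty.
  have [s [c [a [eq ha tc vp]]]] := Lshape vt et (introT idP (etrans (congr1 (fun z => z != v1) st) n1)) (etrans (congr1 (fun z => z != v2) st) n2).
  move: dt; rewrite eq pdeg_rcons => dt.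
  have da : gdeg D a = gdeg D al by case: ha => ->; rewrite ?K_deg.
  rewrite Lmap_rr /= andbT; apply/eqP.
  by move: dt; rewrite da subr0 => /addIr ->; rewrite subr0 subrK.
move=> [|[|k]] [|l] // _ _; rewrite /kq_eqmod.
  have H := ideal_lin (h := fun q => kq_sub (kq_mul dd (Lmap q)) (kq_path K q)) (x := f 0%N 0%N).
  apply: (ideal_ceq _ (H R _)); last first.
    move=> t ty; have /and3P[vt /eqP st /eqP et] := allP Ya t ty.
    by apply: P2L => //; rewrite st.
  apply: ceq_sym; apply: ceq_trans.
    by apply: sub_ceq; [apply: twA00 | apply: ceq_sym; apply: lin_path].
  apply: (ceq_trans _ (lin_sub _ _ _)).
  by apply: sub_ceq; [apply: mul_lin_r' | apply: ceq_refl].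
apply: (ideal_ceq _ (ideal_scale (-1) Hx)) => r.
by rewrite coef_sub (twA10 i (n - 1) _ r) coef_nil coef_scale sub0r mulN1r.
Qed.

Lemma mainB i : i != v1 -> i != v2 -> hom_acyclic (gdeg D) R B (twP K i).
Proof.
move=> n1 n2 n f Hf Hcl.
have /andP[Ya _] := Hf 0%N 0%N isT isT.
have /andP[Xa Xb] := Hf 0%N 1%N isT isT.
rewrite /= in Ya Xa Xb.
have Hy : in_ideal R (f 0%N 0%N).
  have h1 : in_ideal R (kq_mul (f 0%N 0%N) dd).
    apply: (ideal_unscale (c := - (-1) ^ n)); first by rewrite oppr_eq0 sign_neq0.
    apply: (ideal_ceq _ (Hcl 0%N 1%N isT isT)) => r.
    by rewrite coef_sub coef_nil subr0; apply: twB01.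
  have h2 := ideal_lin_map (@Rgen) h1.
  apply: (ideal_ceq _ h2).
  apply: ceq_trans; first by apply: lin_ceq; apply: mul_lin_l.
  apply: ceq_trans; first by apply: lin_lin.
  apply: (ceq_trans _ (lin_path _)).
  apply: lin_ext_in => t tx; have /and3P[vt /eqP st /eqP et] := allP Ya t tx.
  by apply: P1R => //; rewrite et.
pose c : K := - ((-1) ^ (n - 1))^-1.
exists (fun k l => if l == 0%N then kq_scale c (lin Rmap (f 0%N 1%N)) else [::]); split.
  move=> [|k] [|[|l]] // _ _ /=; rewrite /in_eLe /homog; apply/andP; split.
    rewrite (kall_scale (fun p => [&& valid p, pstart p == v2 & pend p == i])).
    apply: (all_lin (P := fun p => [&& valid p, pstart p == v2 & pend p == i])) => t ty.
    have /and3P[vt /eqP st /eqP et] := allP Xa t ty.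
    have [a [c' [s [eq ha sc vp pp]]]] := Rshape vt st (etrans (congr1 (fun z => z != v1) et) n1) (etrans (congr1 (fun z => z != v2) et) n2).
    have ta : tgt a = v2 by case: ha => ->; rewrite ?K_tgt_al ?K_tgt_be.
    by rewrite eq Rmap_cc /= ta vp pp et !eqxx.
  rewrite (kall_scale (fun p => pdeg (gdeg D) p == n - 1 - gdeg D al + 0)).
  apply: (all_lin (P := fun p => pdeg (gdeg D) p == n - 1 - gdeg D al + 0)) => t ty.
  have /and3P[vt /eqP st /eqP et] := allP Xa t ty.
  have /eqP dt := allP Xb t ty.
  have [a [c' [s [eq ha sc vp pp]]]] := Rshape vt st (etrans (congr1 (fun z => z != v1) et) n1) (etrans (congr1 (fun z => z != v2) et) n2).
  have ta : tgt a = v2 by case: ha => ->; rewrite ?K_tgt_al ?K_tgt_be.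
  move: dt; rewrite eq (pdeg_cons _ _ v2) => dt.
  have da : gdeg D a = gdeg D al by case: ha => ->; rewrite ?K_deg.
  rewrite Rmap_cc /= ta andbT; apply/eqP.
  by apply: (addrI (gdeg D a)); rewrite dt da; ring.
move=> [|k] [|[|l]] // _ _; rewrite /kq_eqmod.
  apply: (ideal_ceq _ (ideal_scale (-1) Hy)) => r.
  by rewrite coef_sub (twB00 i (n - 1) _ r) coef_nil coef_scale sub0r mulN1r.
have H := ideal_lin (h := fun q => kq_sub (kq_mul (Rmap q) dd) (kq_path K q)) (x := f 0%N 1%N).
apply: (ideal_ceq _ (H R _)); last first.
  move=> t ty; have /and3P[vt /eqP st /eqP et] := allP Xa t ty.
  by apply: P2R => //; rewrite et.
move=> r; rewrite coef_sub (twB01 i (n - 1) _ r) coef_scale /= (mul_scale_l _ _ _ r) coef_scale.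
have E1 : - (-1) ^ (n - 1) * c = 1 :> K by rewrite /c mulrN mulNr opprK mulfV // sign_neq0.
rewrite mulrA E1 mul1r -coef_sub; apply: ceq_sym.
apply: ceq_trans.
  by apply: sub_ceq; [apply: ceq_refl | apply: ceq_sym; apply: lin_path].
apply: (ceq_trans _ (lin_sub _ _ _)).
by apply: sub_ceq; [apply: mul_lin_l' | apply: ceq_refl].
Qed.

End Setting.

Local Close Scope ring_scope.

Theorem lemma5p6 (K : fieldType) (Q : quiver) (D : gpg Q)
    (al be : arr Q) (v1 v2 : vert Q) (mu : K) :
  is_gpg D -> is_acyclic_kronecker D al be v1 v2 -> mu != 0%R ->
  forall i : vert Q, i != v1 -> i != v2 ->
    hom_acyclic (gdeg D) (gpg_rels D K) (twP K i) (kron_B D al be v1 v2 mu) /\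
    hom_acyclic (gdeg D) (gpg_rels D K) (kron_B D al be v1 v2 mu) (twP K i).
Proof.
move=> HG HK Hmu i n1 n2; split.
  exact: (mainA HG HK Hmu n1 n2).
exact: (mainB HG HK Hmu n1 n2).
Qed.
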